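(* Let ${\bm{x}}^1,\dots,{\bm{x}}^M\in\mathbb{R}^d$ (one data point per client, i.e. $n=1$) satisfy $\|{\bm{x}}^m\|\le1$ and be linearly separable with maximum margin $\gamma=\max_{\|{\bm{w}}\|=1}\min_m\langle{\bm{w}},{\bm{x}}^m\rangle>0$. Let $\ell(z)=\log(1+e^{-z})$, $F_m({\bm{w}})=\ell(\langle{\bm{w}},{\bm{x}}^m\rangle)$. Run Local GD with stepsize $\eta>0$ and $K\in\mathbb{N}$ local steps: ${\bm{w}}_{r,0}^m={\bm{w}}_r$, ${\bm{w}}_{r,k+1}^m={\bm{w}}_{r,k}^m-\eta\nabla F_m({\bm{w}}_{r,k}^m)$ ($k=0,\dots,K-1$). Define $$\beta_r^m=\frac1K\sum_{k=0}^{K-1}\frac{|\ell'(\langle{\bm{w}}_{r,k}^m,{\bm{x}}^m\rangle)|}{|\ell'(\langle{\bm{w}}_r,{\bm{x}}^m\rangle)|}.$$ Suppose ${\bm{w}}_r={\bm{0}}$. Then $\beta_r^m\le\mathcal O\left(\frac1K+\frac1{\eta\gamma^2K}\log(1+\eta\gamma^2K)\right)$, and if additionally $\eta\ge1$, then $\beta_r^m\le\widetilde{\mathcal O}\left(\frac1K\left(1+\frac1{\gamma^2}\right)\right)$.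
   Context: $\mathcal O$ hides universal constants only; $\widetilde{\mathcal O}$ hides universal constants and logarithmic factors. Linear separability means there is ${\bm{w}}$ with $\langle{\bm{w}},{\bm{x}}^m\rangle>0$ for all $m$ (labels absorbed into data). *)

(* Defs.v *)
From HB Require Import structures.
From mathcomp Require Import all_boot all_order all_algebra.
From mathcomp Require Import reals.
From mathcomp Require Import sequences.
From mathcomp.analysis Require Import exp.
Set Implicit Arguments. Unset Strict Implicit. Unset Printing Implicit Defensive.
Import Order.TTheory GRing.Theory Num.Theory.
Local Open Scope ring_scope.

Section Defs.
Variable R : realType.

Definition dot (d : nat) (u v : 'rV[R]_d) : R := \sum_(i < d) u 0 i * v 0 i.

Definition logloss (z : R) : R := ln (1 + expR (- z)).

Definition logloss' (z : R) : R := - (expR (- z) / (1 + expR (- z))).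

Definition gradF (d : nat) (x w : 'rV[R]_d) : 'rV[R]_d := logloss' (dot w x) *: x.

Fixpoint local_iter (d : nat) (eta : R) (x w0 : 'rV[R]_d) (k : nat) : 'rV[R]_d :=
  match k with
  | 0 => w0
  | k'.+1 => let w := local_iter eta x w0 k' in w - eta *: gradF x w
  end.

Definition beta (d : nat) (eta : R) (K : nat) (x w0 : 'rV[R]_d) : R :=
  K%:R^-1 * \sum_(k < K)
     (`|logloss' (dot (local_iter eta x w0 k) x)| / `|logloss' (dot w0 x)|).

Definition max_margin (d M : nat) (X : 'I_M -> 'rV[R]_d) (gamma : R) : Prop :=
  (exists w : 'rV[R]_d, dot w w = 1 /\ forall m, gamma <= dot w (X m)) /\
  (forall w : 'rV[R]_d, dot w w = 1 -> exists m, dot w (X m) <= gamma).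

End Defs.

(* Main.v *)
Require Import Defs.
From HB Require Import structures.
From mathcomp Require Import all_boot all_order all_algebra.
From mathcomp Require Import reals.
From mathcomp Require Import sequences.
From mathcomp.analysis Require Import exp.
From mathcomp Require Import ring lra.
Import Order.TTheory GRing.Theory Num.Theory.
Local Open Scope ring_scope.

Section Aux.
Variable R : realType.

Lemma dotDZ d (a : R) (u v x : 'rV[R]_d) : dot (a *: u + v) x = a * dot u x + dot v x.
Proof. rewrite /dot mulr_sumr -big_split /=; apply: eq_bigr => i _; rewrite !mxE; ring. Qed.

Lemma dotC d (u v : 'rV[R]_d) : dot u v = dot v u.
Proof. by rewrite /dot; apply: eq_bigr => i _; rewrite mulrC. Qed.

Lemma dot0l d (x : 'rV[R]_d) : dot 0 x = 0.
Proof. by rewrite /dot big1 // => i _; rewrite mxE mul0r. Qed.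

Lemma dot_ge0 d (x : 'rV[R]_d) : 0 <= dot x x.
Proof. by rewrite /dot sumr_ge0 // => i _; rewrite -expr2 sqr_ge0. Qed.

Definition g (z : R) := expR (- z) / (1 + expR (- z)).

Lemma g_ge0 z : 0 <= g z.
Proof. by rewrite /g divr_ge0 // ?addr_ge0 // ltW // expR_gt0. Qed.

Lemma iterS d eta (x : 'rV[R]_d) k :
  dot (local_iter eta x 0 k.+1) x =
  dot (local_iter eta x 0 k) x + eta * dot x x * g (dot (local_iter eta x 0 k) x).
Proof.
rewrite /= /gradF scalerA.
have -> : forall w : 'rV[R]_d, w - (eta * logloss' (dot w x)) *: x
   = (- (eta * logloss' (dot w x))) *: x + w.
  by move=> w; rewrite scaleNr addrC.
rewrite dotDZ /logloss' /g; ring.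
Qed.

Lemma dyn d eta (x : 'rV[R]_d) (c : R) : 0 < c -> c <= eta * dot x x / 2 ->
  forall k, 0 <= dot (local_iter eta x 0 k) x /\
            1 + k%:R * c <= expR (dot (local_iter eta x 0 k) x).
Proof.
move=> c0 cle; elim => [|k [z0 zE]].
  by rewrite /= dot0l expR0 mul0r addr0.
rewrite iterS; set z := dot _ x in z0 zE *; set b := eta * dot x x in cle *.

have b0 : 0 <= b by lra.
have gz := g_ge0 z.
have bg0 : 0 <= b * g z by rewrite mulr_ge0.
split.

lra.
have E1 : 1 <= expR z by have := ler0n R k; nra.
set E := expR z in E1 zE *.
have Ee : E * expR (- z) = 1 by rewrite /E expRxMexpNx_1.
have e0 : 0 < expR (- z) by rewrite expR_gt0.
have e1 : expR (- z) <= 1 by nra.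
set e := expR (- z) in Ee e0 e1.
have Eg : E * g z = (1 + e)^-1 by rewrite /g /e mulrA Ee mul1r.
have half : 1/2 <= E * g z.
  rewrite Eg; set t := (1 + e)^-1.
  have ht : t * (1 + e) = 1 by rewrite /t mulVf //; lra.
  have tp : 0 < t by rewrite /t invr_gt0; lra.
  nra.
rewrite expRD.
have h1 : E * (1 + b * g z) <= E * expR (b * g z).
  by rewrite ler_wpM2l ?expR_ge1Dx //; lra.
have : E * (1 + b * g z) = E + b * (E * g z) by ring.
have hb : b * (1/2) <= b * (E * g z) by rewrite ler_wpM2l.
rewrite -nat1r -/E.
lra.
Qed.

Lemma sum_bound (c : R) : 0 < c -> forall n,
  \sum_(k < n.+1) (1 + k%:R * c)^-1 <= 1 + ln (1 + n%:R * c) / c.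
Proof.
move=> c0; elim => [|n IH].
  by rewrite big_ord1 /= mul0r addr0 invr1 ln1 mul0r addr0.
rewrite big_ord_recr /=.
set u := 1 + n%:R * c in IH *.
have u0 : 0 < u by rewrite /u; have := ler0n R n; nra.
have -> : 1 + n.+1%:R * c = u + c by rewrite -nat1r /u; ring.
suff : (u + c)^-1 <= (ln (u + c) - ln u) / c.
  have : ln (u + c) / c = ln u / c + (ln (u + c) - ln u) / c by field; lra.
  lra.
have v0 : 0 < u + c by lra.
have hl := expR_ge1Dx (ln u - ln (u + c)).
rewrite expRB !lnK ?posrE // in hl.
have : u / (u + c) = 1 - c / (u + c) by field; lra.
move=> eq; rewrite eq in hl.
rewrite ler_pdivlMr //.
have : c / (u + c) = (u + c)^-1 * c by rewrite mulrC.
lra.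
Qed.

Lemma key d eta (x : 'rV[R]_d) (c : R) K : 0 < c -> c <= eta * dot x x / 2 -> (0 < K)%N ->
  beta eta K x 0 <= K%:R^-1 * (2 * (1 + ln (1 + K%:R * c) / c)).
Proof.
move=> c0 cle K0; rewrite /beta.
have Kp : 0 < K%:R^-1 :> R by rewrite invr_gt0 ltr0n.
apply: ler_wpM2l; first exact: ltW.
have l0 : `|logloss' (dot (0 : 'rV[R]_d) x)| = 1/2.
  rewrite dot0l /logloss' oppr0 expR0 normrN ger0_norm ?divr_ge0 //.
  by rewrite -[1 + 1]/(2%:R : R).
have gn z : `|logloss' z| = g z by rewrite /logloss' normrN ger0_norm // g_ge0.
have step : forall k : 'I_K, `|logloss' (dot (local_iter eta x 0 k) x)| /
     `|logloss' (dot (0 : 'rV[R]_d) x)| <= 2 * (1 + k%:R * c)^-1.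
  move=> k; rewrite l0 gn.
  have [z0 zE] := dyn _ _ _ _ c0 cle (nat_of_ord k).
  set z := dot _ x in z0 zE *.
  have : g z <= expR (- z).
    rewrite /g ler_pdivrMr ?ler_peMr //; try (have := expR_gt0 (- z)); lra.
  have : expR (- z) <= (1 + k%:R * c)^-1.
    rewrite expRN lef_pV2 ?posrE ?expR_gt0 //; have := ler0n R k; nra.
  have -> : g z / (1 / 2) = 2 * g z by field.
  lra.
apply: le_trans; first by apply: ler_sum => k _; apply: step.
rewrite -mulr_sumr; apply: ler_wpM2l => //.
case: K K0 Kp step => // K' _ _ _.
apply: le_trans; first exact: sum_bound.
rewrite lerD2l; apply: ler_wpM2r; first by rewrite invr_ge0 ltW.
have h1 : 0 < 1 + K'%:R * c by have := ler0n R K'; nra.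
rewrite ler_ln ?posrE //; first by rewrite -nat1r; lra.
by have := ler0n R K'.+1; nra.
Qed.

End Aux.
Arguments dotDZ {R d}.
Arguments dotC {R d}.
Arguments dot_ge0 {R d}.
Arguments key {R d eta x c K}.

Theorem lemmaB7 :
  exists C : nat,
  forall (R : realType) (d M : nat) (X : 'I_M -> 'rV[R]_d) (gamma eta : R) (K : nat),
    (0 < M)%N ->
    (forall m, dot (X m) (X m) <= 1) ->
    max_margin X gamma -> 0 < gamma ->
    0 < eta -> (0 < K)%N ->
    forall m : 'I_M,
      beta eta K (X m) 0 <=
        C%:R * (K%:R^-1 + ln (1 + eta * gamma ^+ 2 * K%:R) / (eta * gamma ^+ 2 * K%:R))
      /\
      (1 <= eta ->
       beta eta K (X m) 0 <=
         C%:R * (K%:R^-1 * (1 + gamma ^- 2)) * (1 + ln (1 + K%:R))).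
Proof.
exists 4%N => R d M X gamma eta K M0 Xle [[w [ww wX]] _] g0 eta0 K0 m.
set x := X m.
have s1 := Xle m.
have hs : gamma ^+ 2 <= dot x x.
  set t := dot w x.
  have gt : gamma <= t by apply: wX.
  set v := (- t) *: w + x.
  have hw : dot w v = 0.
    by rewrite dotC /v dotDZ ww (dotC x w) -/t; ring.
  have hv : dot v v = dot x x - t ^+ 2.
    rewrite {1}/v dotDZ hw dotC /v dotDZ -/t; ring.
  have := dot_ge0 v; rewrite hv => h.
  have : gamma ^+ 2 <= t ^+ 2 by rewrite ler_pXn2r // ?nnegrE; lra.
  lra.
have Kr : 0 < K%:R :> R by rewrite ltr0n.
have kp : 0 < K%:R^-1 :> R by rewrite invr_gt0.
have gp : 0 < gamma ^+ 2 by rewrite exprn_gt0.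
split.
  set a := eta * gamma ^+ 2.
  have ap : 0 < a by rewrite mulr_gt0.
  have c0 : 0 < a / 2 by lra.
  have cle : a / 2 <= eta * dot x x / 2.
    by rewrite /a; have := ler_wpM2l (ltW eta0) hs; lra.
  have hk := key c0 cle K0.
  apply: le_trans hk _.
  set L' := ln (1 + K%:R * (a / 2)).
  set L := ln (1 + a * K%:R).
  have pos1 : 0 < 1 + K%:R * (a / 2) by have := mulr_gt0 Kr c0; lra.
  have hL : L' <= L.
    rewrite /L' /L ler_ln ?posrE //; first by nra.
    by have := mulr_gt0 ap Kr; lra.
  have -> : K%:R^-1 * (2 * (1 + L' / (a / 2))) = 2 * K%:R^-1 + 4 * (L' / (a * K%:R)).
    by field; apply/andP; split; lra.
  have : L' / (a * K%:R) <= L / (a * K%:R).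
    by apply: ler_wpM2r => //; rewrite invr_ge0 ltW // mulr_gt0.
  have -> : (4%N%:R : R) = 4 by [].
  lra.
move=> eta1.
have c0 : 0 < gamma ^+ 2 / 2 by lra.
have cle : gamma ^+ 2 / 2 <= eta * dot x x / 2.
  have : gamma ^+ 2 <= eta * dot x x.
    have := ler_wpM2r (ltW (lt_le_trans gp hs)) eta1; rewrite mul1r; lra.
  lra.
have hk := key c0 cle K0.
apply: le_trans hk _.
set L' := ln (1 + K%:R * (gamma ^+ 2 / 2)).
set L := ln (1 + K%:R).
have pos1 : 0 < 1 + K%:R * (gamma ^+ 2 / 2) by have := mulr_gt0 Kr c0; lra.
have g1 : gamma ^+ 2 <= 1 by lra.
have hL : L' <= L.
  rewrite /L' /L ler_ln ?posrE //; first by nra.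
  lra.
have L'0 : 0 <= L' by rewrite /L' ln_ge0 //; have := mulr_gt0 Kr c0; lra.
have L0 : 0 <= L by lra.
set G := gamma ^- 2.
have Gp : 0 < G by rewrite /G invr_gt0.
set k := K%:R^-1.
have -> : k * (2 * (1 + L' / (gamma ^+ 2 / 2))) = 2 * k + 4 * (k * G * L').
  by rewrite /k /G; field; lra.
have h1 : k * G * L' <= k * G * L by rewrite ler_wpM2l // mulr_ge0 // ltW.
have h2 : 0 <= k * G * L by rewrite !mulr_ge0 // ltW.
have h3 : 0 <= k * L by rewrite !mulr_ge0 // ltW.
have h4 : 0 <= k * G by rewrite !mulr_ge0 // ltW.
have -> : (4%N%:R : R) = 4 by [].
have -> : 4 * (k * (1 + G)) * (1 + L) = 4 * k + 4 * (k * G) + 4 * (k * L) + 4 * (k * G * L) by ring.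
have kp2 : 0 < k by [].
clearbody k G L L'.
lra.
Qed.
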